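(* Let $A\in\mathbb{R}^{l\times m}$ and $B\in\mathbb{R}^{n\times m}$, and consider the parametrized system $A\,(c\circ x^B)=0$ with parameters $c\in\mathbb{R}^m_{>0}$. Assume $\ker A\cap\mathbb{R}^m_{>0}\neq\emptyset$, $\dim P=1$ and $d=1$. Then the following are equivalent: (1) $|Y_c|\ge1$ for all $c\in\mathbb{R}^m_{>0}$; (2) $\tilde b_1\cdot\tilde b_\omega<0$.
   Context: Notation: for $x\in\mathbb{R}^n_{>0}$ and $y\in\mathbb{R}^n$, $x^y=\prod_{i=1}^n x_i^{y_i}$; for a matrix $B=(b^1,\dots,b^m)\in\mathbb{R}^{n\times m}$, $x^B\in\mathbb{R}^m_{>0}$ is the vector with entries $x^{b^j}$; $\circ$ denotes the componentwise product, and $(\cdot)^{-1}$ applied to a positive vector is componentwise. $1_m\in\mathbb{R}^m$ is the all-ones vector. (One class setting.) The coefficient polytope is $P=\{y\in\ker A\cap\mathbb{R}^m_{>0} : 1_m\cdot y=1\}$. The monomial dependency subspace is $D=\ker\begin{pmatrix}B\\ 1_m^{\mathsf T}\end{pmatrix}\subseteq\mathbb{R}^m$ and the monomial dependency is $d=\dim D$. The solution set on the coefficient polytope is $Y_c=\{y\in P : y^z=c^z \text{ for all } z\in D\}$. When $\dim P=1$, the closure $\overline P=\{y\in\ker A\cap\mathbb{R}^m_{\ge0}: 1_m\cdot y=1\}$ is a line segment with two endpoints $y^1,y^2$; set $q=(y^1-y^2)\circ(y^1+y^2)^{-1}\in\mathbb{R}^m$, and assume (after reordering the indices $\{1,\dots,m\}$)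 that $1=q_1\ge q_2\ge\cdots\ge q_m=-1$. Let $I_1,\dots,I_\omega\subseteq\{1,\dots,m\}$ be the $\omega$ equivalence classes of indices with equal (consecutive) components of $q$, ordered so that the common value $\tilde q_i$ of $q$ on $I_i$ is strictly decreasing in $i$. When $d=1$, let $b\in\mathbb{R}^m$ span $D$, and define the lumped vector $\tilde b\in\mathbb{R}^\omega$ by $\tilde b_i=\sum_{i'\in I_i}b_{i'}$. *)

(* Defs.v *)
From HB Require Import structures.
From mathcomp Require Import all_boot all_order all_algebra.
From mathcomp Require Import reals exp.
Set Implicit Arguments. Unset Strict Implicit. Unset Printing Implicit Defensive.
Import Order.TTheory GRing.Theory Num.Theory.
Local Open Scope ring_scope.

Section Defs.
Variable R : realType.

Definition posv (m : nat) (x : 'rV[R]_m) : Prop := forall i, 0 < x 0 i.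
Definition nnegv (m : nat) (x : 'rV[R]_m) : Prop := forall i, 0 <= x 0 i.

Definition in_ker (l m : nat) (A : 'M[R]_(l, m)) (y : 'rV[R]_m) : Prop :=
  A *m y^T = 0.

Definition onesum (m : nat) (y : 'rV[R]_m) : R := \sum_i y 0 i.

Definition mpow (m : nat) (x y : 'rV[R]_m) : R := \prod_i powR (x 0 i) (y 0 i).

Definition coefP (l m : nat) (A : 'M[R]_(l, m)) (y : 'rV[R]_m) : Prop :=
  in_ker A y /\ posv y /\ onesum y = 1.
Definition coefPbar (l m : nat) (A : 'M[R]_(l, m)) (y : 'rV[R]_m) : Prop :=
  in_ker A y /\ nnegv y /\ onesum y = 1.

Definition affine_dim (m : nat) (S : 'rV[R]_m -> Prop) (k : nat) : Prop :=
  exists (p0 : 'rV[R]_m) (V : 'M[R]_(k, m)),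
    S p0 /\ (forall i, S (p0 + row i V)) /\ row_free V /\
    (forall y, S y -> (y - p0 <= V)%MS).

(* the matrix (B ; 1_m^T)^T, so that D = ker (B ; 1_m^T) is the row kernel
   kermx (Dmat B) : z \in D  <->  z *m Dmat B = 0 *)
Definition Dmat (n m : nat) (B : 'M[R]_(n, m)) : 'M[R]_(m, n + 1) :=
  (col_mx B (const_mx 1 : 'M[R]_(1, m)))^T.

Definition in_D (n m : nat) (B : 'M[R]_(n, m)) (z : 'rV[R]_m) : Prop :=
  z *m Dmat B = 0.

Definition mondep (n m : nat) (B : 'M[R]_(n, m)) : nat := \rank (kermx (Dmat B)).

Definition Yc (l n m : nat) (A : 'M[R]_(l, m)) (B : 'M[R]_(n, m))
  (c : 'rV[R]_m) (y : 'rV[R]_m) : Prop :=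
  coefP A y /\ forall z, in_D B z -> mpow y z = mpow c z.

Definition qvec (m : nat) (y1 y2 : 'rV[R]_m) (i : 'I_m) : R :=
  (y1 0 i - y2 0 i) / (y1 0 i + y2 0 i).

Definition Ifirst (m : nat) (y1 y2 : 'rV[R]_m) : {set 'I_m} :=
  [set i | [forall j, qvec y1 y2 j <= qvec y1 y2 i]].
Definition Ilast (m : nat) (y1 y2 : 'rV[R]_m) : {set 'I_m} :=
  [set i | [forall j, qvec y1 y2 i <= qvec y1 y2 j]].

Definition btilde_first (m : nat) (y1 y2 b : 'rV[R]_m) : R :=
  \sum_(i in Ifirst y1 y2) b 0 i.
Definition btilde_last (m : nat) (y1 y2 b : 'rV[R]_m) : R :=
  \sum_(i in Ilast y1 y2) b 0 i.

End Defs.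

(* Main.v *)
Require Import Defs.
From HB Require Import structures.
From mathcomp Require Import all_boot all_order all_algebra.
From mathcomp Require Import reals exp.
From mathcomp Require Import boolp classical_sets topology normedtype.
From mathcomp Require Import ring lra sequences.
Import Order.TTheory GRing.Theory Num.Theory.
Import numFieldNormedType.Exports.
Local Open Scope ring_scope.
Lemma cont_aff (R : realType) (a c t : R) :
  {for t, continuous (fun u : R => (1 - u) * a + u * c)}.
Proof.
apply: (@continuousD R R^o).
  apply: (@continuousM R R (fun u => 1 - u) (fun=> a)); last exact: cst_continuous.
  apply: (@continuousD R R^o); first exact: cst_continuous.
  apply: (@continuousN R R^o); exact: cvg_id.
apply: (@continuousM R R (fun u => u) (fun=> c)); last exact: cst_continuous.
exact: cvg_id.
Qed.

Lemma cont_G (R : realType) (I : Type) (s : seq I) (w a c : I -> R) (t : R) :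
  (forall i, 0 < (1 - t) * a i + t * c i) ->
  {for t, continuous (fun u : R => \sum_(i <- s) w i * ln ((1 - u) * a i + u * c i))}.
Proof.
move=> pos; elim: s => [|i s IH].
  have -> : (fun u : R => \sum_(i <- [::]) w i * ln ((1 - u) * a i + u * c i)) = fun=> 0.
    by apply/funext => u; rewrite big_nil.
  exact: cst_continuous.
have -> : (fun u : R => \sum_(j <- i :: s) w j * ln ((1 - u) * a j + u * c j)) =
  (fun u => w i * ln ((1 - u) * a i + u * c i) + \sum_(j <- s) w j * ln ((1 - u) * a j + u * c j)).
  by apply/funext => u; rewrite big_cons.
have H1 : {for t, continuous (fun u : R => w i * ln ((1 - u) * a i + u * c i))}.
  apply: (@continuousM R R (fun=> w i) (fun u => ln ((1 - u) * a i + u * c i))).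
    exact: cst_continuous.
  exact: (continuous_comp (@cont_aff R (a i) (c i) t) (continuous_ln (pos i))).
exact: (@continuousD R R^o R _ _ t H1 IH).
Qed.
Section Core.
Variable R : realType.

Lemma ln_half_bounds (x : R) : 2^-1 <= x -> x <= 1 -> - ln 2 <= ln x <= 0.
Proof.
move=> h1 h2; have x0 : 0 < x by apply: lt_le_trans h1; rewrite invr_gt0.
rewrite ln_le0 // andbT -lnV ?posrE //.
by rewrite ler_ln // ?posrE ?invr_gt0.
Qed.

Lemma phi_low (bl bf M : R) : 0 < bl ->
  exists t, 0 < t < 1 /\ bl * ln t + bf * ln (1 - t) <= M.
Proof.
move=> blp.
have l2 : 0 < ln (2 : R) by rewrite ln_gt0 // ltr1n.
pose X := `|M| + `|bf| * ln 2.
pose s := Num.max (ln (2:R)) (X / bl).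
have s1 : ln 2 <= s by rewrite le_max lexx.
have s2 : X <= bl * s.
  have : X / bl <= s by rewrite le_max lexx orbT.
  by rewrite ler_pdivrMr // mulrC.
exists (expR (- s)).
have t0 : 0 < expR (- s) by apply: expR_gt0.
have th : expR (- s) <= 2^-1.
  rewrite -[2^-1]lnK ?posrE ?invr_gt0 // lnV ?posrE //.
  by rewrite ler_expR lerN2.
split.
  by rewrite t0 /=; apply: le_lt_trans th _; rewrite invf_lt1 // ltr1n.
rewrite expRK.
have := @ln_half_bounds (1 - expR (- s)).
have h1 : 2^-1 <= 1 - expR (- s).
  move: th; lra.
have h2 : 1 - expR (- s) <= 1 by move: t0; lra.
move=> /(_ h1 h2) /andP[].
set z := ln (1 - expR (- s)) => z1 z2.
have : bf * z <= `|bf| * ln 2.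
  apply: le_trans (ler_norm _) _; rewrite normrM ler_wpM2l //.
  by rewrite ler0_norm // lerNl.
have : `|M| >= - M by rewrite -normrN ler_norm.
rewrite /X in s2.
lra.
Qed.

Lemma phi_any_low (bl bf M : R) : bl * bf < 0 ->
  exists t, 0 < t < 1 /\ bl * ln t + bf * ln (1 - t) <= M.
Proof.
move=> hb; have [blp|blle] := ltP 0 bl; first exact: phi_low.
have bfp : 0 < bf by nra.
have [t [/andP[t0 t1] ht]] := @phi_low bf bl M bfp.
exists (1 - t); split; first by apply/andP; split; lra.
have -> : 1 - (1 - t) = t by ring.
lra.
Qed.

Lemma phi_any_high (bl bf M : R) : bl * bf < 0 ->
  exists t, 0 < t < 1 /\ M <= bl * ln t + bf * ln (1 - t).
Proof.
move=> hb; have hb' : (- bl) * (- bf) < 0 by rewrite mulrNN.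
have [t [ht h]] := @phi_any_low (- bl) (- bf) (- M) hb'.
exists t; split => //; lra.
Qed.

Lemma core_onto (G : R -> R) (bl bf C K : R) :
  (forall t, 0 < t < 1 -> {for t, continuous G}) ->
  (forall t, 0 < t < 1 -> `|G t - (bl * ln t + bf * ln (1 - t) + C)| <= K) ->
  bl * bf < 0 -> forall L, exists t, 0 < t < 1 /\ G t = L.
Proof.
move=> Gc Gb hb L.
have [t0 [h0 p0]] := @phi_any_low bl bf (L - C - K) hb.
have [t1 [h1 p1]] := @phi_any_high bl bf (L - C + K) hb.
have g0 : G t0 <= L.
  have := Gb _ h0; rewrite ler_norml => /andP[_]; lra.
have g1 : L <= G t1.
  have := Gb _ h1; rewrite ler_norml => /andP[+ _]; lra.
have key : forall a b, 0 < a < 1 -> 0 < b < 1 -> a <= b ->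
    Num.min (G a) (G b) <= L <= Num.max (G a) (G b) -> exists t, 0 < t < 1 /\ G t = L.
  move=> a b ha hb' ab hL.
  have hc : {within `[a, b], continuous G}%classic.
    apply: continuous_in_subspaceT => x; rewrite inE /= in_itv /= => /andP[ax xb].
    by apply: Gc; apply/andP; split; lra.
  have [c cab Gc'] := IVT ab hc hL.
  exists c; split => //; move: cab; rewrite in_itv /= => /andP[ac cb].
  by apply/andP; split; lra.
have [t01|t10] := leP t0 t1.
  apply: (key t0 t1) => //; apply/andP; split.
    by rewrite ge_min g0.
  by rewrite le_max g1 orbT.
apply: (key t1 t0) => //; first exact: ltW.
apply/andP; split; first by rewrite ge_min g0 orbT.
by rewrite le_max g1.
Qed.

Lemma core_notonto (G : R -> R) (bl bf C K : R) :
  (forall t, 0 < t < 1 -> `|G t - (bl * ln t + bf * ln (1 - t) + C)| <= K) ->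
  0 <= bl * bf -> exists L, forall t, 0 < t < 1 -> G t != L.
Proof.
move=> Gb hb.
have lnt : forall t : R, 0 < t < 1 -> ln t <= 0 /\ ln (1 - t) <= 0.
  move=> t /andP[t0 t1]; split; apply: ln_le0; lra.
have [blp|bln] := leP 0 bl.
  have [bfp|bfn] := leP 0 bf.
    exists (C + K + 1) => t ht; have [l1 l2] := lnt t ht.
    have := Gb t ht; rewrite ler_norml => /andP[_ h].
    apply/negP => /eqP e; rewrite e in h; nra.
  have bl0 : bl = 0 by nra.
  exists (C - K - 1) => t ht; have [l1 l2] := lnt t ht.
  have := Gb t ht; rewrite ler_norml => /andP[h _].
  apply/negP => /eqP e; rewrite e bl0 in h; nra.
have bfn : bf <= 0 by nra.
exists (C - K - 1) => t ht; have [l1 l2] := lnt t ht.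
have := Gb t ht; rewrite ler_norml => /andP[h _].
apply/negP => /eqP e; rewrite e in h; nra.
Qed.
End Core.
Section Struct.
Context {R : realType}.

Definition Lg {m : nat} (y z : 'rV[R]_m) : R := \sum_i z 0 i * ln (y 0 i).

Lemma mpow_pos (m : nat) (y z : 'rV[R]_m) : posv y -> mpow y z = expR (Lg y z).
Proof.
move=> py; rewrite /mpow /Lg expR_sum; apply: eq_bigr => i _.
by rewrite /powR gt_eqF ?py.
Qed.

Lemma Yc_iff (l n m : nat) (A : 'M[R]_(l, m)) (B : 'M[R]_(n, m)) (b c y : 'rV[R]_m) :
  posv c -> (b == kermx (Dmat B))%MS ->
  (Yc A B c y <-> coefP A y /\ Lg y b = Lg c b).
Proof.
move=> pc /eqmxP eqb.
have inDb : in_D B b by apply/sub_kermxP; rewrite eqb.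
split.
  move=> [cy hz]; split => //.
  have py : posv y by case: cy => _ [].
  by apply: expR_inj; rewrite -!mpow_pos // hz.
move=> [cy hL]; split => // z /sub_kermxP; rewrite -eqb => /submxP [u ->].
have py : posv y by case: cy => _ [].
rewrite !mpow_pos //; congr expR.
have e : forall x : 'rV[R]_m, Lg x (u *m b) = u 0 0 * Lg x b.
  move=> x; rewrite /Lg mulr_sumr; apply: eq_bigr => i _.
  by rewrite !mxE big_ord1 mulrA.
by rewrite !e hL.
Qed.
End Struct.
Section Seg.
Context {R : realType} {l m : nat} (A : 'M[R]_(l, m)).

Definition segchar (u v : 'rV[R]_m) := forall y, coefPbar A y <->
     exists t : R, 0 <= t <= 1 /\ y = (1 - t) *: u + t *: v.

Lemma segchar_swap {u v} : segchar u v -> segchar v u.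
Proof.
have e : forall t : R, 1 - (1 - t) = t by move=> t; ring.
move=> h y; rewrite h; split => -[t [/andP[t0 t1] ->]]; exists (1 - t);
  (split; first by apply/andP; split; lra);
  by rewrite e addrC.
Qed.

Lemma seg_end {u v} : segchar u v -> coefPbar A u.
Proof.
move=> h; apply/h; exists 0; split; first by rewrite lexx ler01.
by rewrite subr0 scale1r scale0r addr0.
Qed.

Lemma seg_nneg {u v} : segchar u v -> forall i, 0 <= u 0 i /\ 0 <= v 0 i.
Proof.
move=> h i; split; first by case: (seg_end h) => _ [].
by case: (seg_end (segchar_swap h)) => _ [].
Qed.

Lemma onesum_pos {y : 'rV[R]_m} (i : 'I_m) : posv y -> 0 < onesum y.
Proof.
move=> py; rewrite /onesum (bigD1 i) //=.
apply: lt_le_trans (py i) _; rewrite lerDl.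
by apply: sumr_ge0 => j _; apply: ltW.
Qed.

Lemma seg_pos {u v} : segchar u v -> (exists y, in_ker A y /\ posv y) ->
  forall i, 0 < u 0 i + v 0 i.
Proof.
move=> h [y [ky py]] i.
have s0 := onesum_pos i py.
set s := onesum y in s0.
have : coefPbar A (s^-1 *: y).
  split; first by rewrite /in_ker linearZ /= -scalemxAr ky scaler0.
  split; first by move=> j; rewrite mxE mulr_ge0 // ?invr_ge0 ltW // py.
  rewrite /onesum; under eq_bigr do rewrite mxE.
  by rewrite -mulr_sumr mulVf // gt_eqF.
move/h => [t [/andP[t0 t1] e]].
have := congr1 (fun M : 'rV_m => M 0 i) e; rewrite /= !mxE => e2.
have : 0 < s^-1 * y 0 i by rewrite mulr_gt0 ?invr_gt0 ?py.
rewrite e2; have [a0 b0] := seg_nneg h i; nra.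
Qed.

Lemma seg_zero {u v} : segchar u v -> u != v -> exists i, u 0 i = 0.
Proof.
move=> h uv.
case: (boolP [exists i, u 0 i == 0]) => [/existsP [i /eqP]|/existsP hne]; first by eauto.
exfalso.
have upos : forall i, 0 < u 0 i.
  move=> i; have [a0 _] := seg_nneg h i; rewrite lt_neqAle a0 andbT eq_sym.
  by apply/negP => ui; apply: hne; exists i.
have [j uvj] : exists j, u 0 j != v 0 j.
  case: (boolP [exists j, u 0 j != v 0 j]) => [/existsP //|/existsP hn].
  exfalso; move/negP: uv; apply; apply/eqP/rowP => j.
  by apply/eqP/negP => e; apply: hn; exists j; apply/negP.
pose S := \sum_k v 0 k / u 0 k.
have S0 : 0 <= S.
  by apply: sumr_ge0 => k _; apply: divr_ge0; [case: (seg_nneg h k) | apply: ltW].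
pose e := (1 + S)^-1.
have e0 : 0 < e by rewrite invr_gt0; lra.
have ek : forall k, e * v 0 k <= u 0 k.
  move=> k; have -> : e * v 0 k = v 0 k / (1 + S) by rewrite /e mulrC.
  rewrite ler_pdivrMr; last by lra.
  have : v 0 k / u 0 k <= S.
    rewrite /S (bigD1 k) //= lerDl; apply: sumr_ge0 => k' _.
    by apply: divr_ge0; [case: (seg_nneg h k') | apply: ltW].
  rewrite ler_pdivrMr // => hk.
  have := upos k; have [_ vk] := seg_nneg h k; nra.
pose z := u + e *: (u - v).
have [ku [nu su]] := seg_end h.
have [kv [nv sv]] := seg_end (segchar_swap h).
have zb : coefPbar A z.
  split.
    rewrite /in_ker /z linearD linearZ linearB /= mulmxDr -scalemxAr mulmxBr.
    by rewrite ku kv subrr scaler0 addr0.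
  split.
    move=> k; rewrite /z !mxE; have := ek k; have := upos k; have := nv k; nra.
  rewrite /onesum /z in su sv *; under eq_bigr do rewrite !mxE.
  by rewrite big_split /= -mulr_sumr sumrB su sv subrr mulr0 addr0.
move/h: zb => [t [/andP[t0 t1] ez]].
have := congr1 (fun M : 'rV_m => M 0 j) ez; rewrite /= !mxE => ej.
have : (t + e) * (u 0 j - v 0 j) = 0.
  have -> : (t + e) * (u 0 j - v 0 j) = (u 0 j + e * (u 0 j - v 0 j)) - ((1 - t) * u 0 j + t * v 0 j) by ring.
  by rewrite ej subrr.
move/eqP; rewrite mulf_eq0 subr_eq0 (negbTE uvj) orbF => /eqP.
lra.
Qed.
End Seg.
Arguments segchar_swap {R l m A u v}.
Arguments seg_end {R l m A u v}.
Arguments seg_nneg {R l m A u v}.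
Arguments seg_pos {R l m A u v}.
Arguments seg_zero {R l m A u v}.

Section Seg2.
Variable R : realType.
Variables (l m : nat) (A : 'M[R]_(l, m)).

Lemma coefP_iff {u v : 'rV[R]_m} : segchar A u v -> (exists i, u 0 i = 0) ->
  (exists j, v 0 j = 0) -> (forall i, 0 < u 0 i + v 0 i) ->
  forall y, coefP A y <-> exists t, 0 < t < 1 /\ y = (1 - t) *: u + t *: v.
Proof.
move=> h [i ui] [j vj] pos y; split.
  move=> [ky [py sy]].
  have : coefPbar A y by split => //; split => // k; apply: ltW.
  move/h => [t [/andP[t0 t1] ey]]; exists t; split => //.
  have := py i; have := py j; rewrite ey !mxE ui vj => pj pi'.
  apply/andP; split.
    rewrite lt_neqAle t0 andbT eq_sym; apply/eqP => e; move: pi'; rewrite e; lra.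
  rewrite lt_neqAle t1 andbT; apply/eqP => e; move: pj; rewrite e; lra.
move=> [t [/andP[t0 t1] ey]].
have : coefPbar A y by apply/h; exists t; split => //; apply/andP; split; lra.
move=> [ky [_ sy]]; split => //; split => // k.
rewrite ey !mxE; have := pos k; have [a b] := seg_nneg h k => p.
have h2 : 0 <= t * v 0 k by apply: mulr_ge0 => //; lra.
have h1 : 0 <= (1 - t) * u 0 k by apply: mulr_ge0 => //; lra.
have [up|] := ltP 0 (u 0 k).
  have : 0 < (1 - t) * u 0 k by apply: mulr_gt0 => //; lra.
  lra.
move=> u0; have vp : 0 < v 0 k by lra.
have : 0 < t * v 0 k by apply: mulr_gt0.
lra.
Qed.
End Seg2.

Section Q.
Variable R : realType.
Variable m : nat.

Lemma qvec_swap (u v : 'rV[R]_m) k : qvec v u k = - qvec u v k.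
Proof. by rewrite /qvec -mulNr opprB [u 0 k + v 0 k]addrC. Qed.

Lemma Ilast_eq (u v : 'rV[R]_m) : (forall i, 0 <= u 0 i /\ 0 <= v 0 i) ->
  (forall i, 0 < u 0 i + v 0 i) -> (exists i, u 0 i = 0) ->
  Ilast u v = [set i | u 0 i == 0].
Proof.
move=> nn pos [i0 ui0]; apply/setP => i; rewrite !inE.
have qge : forall k, -1 <= qvec u v k.
  move=> k; rewrite /qvec ler_pdivlMr //; have [a b] := nn k; lra.
have qle : forall k, qvec u v k <= -1 -> u 0 k = 0.
  move=> k; rewrite /qvec ler_pdivrMr // => hk; have [a b] := nn k; lra.
have qeq : forall k, u 0 k = 0 -> qvec u v k = -1.
  move=> k uk; have := pos k; rewrite /qvec uk sub0r add0r mulNr => vk.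
  by rewrite divff // gt_eqF.
apply/forallP/eqP.
  by move=> H; apply: qle; rewrite -(qeq _ ui0); apply: H.
by move=> ui j; rewrite qeq.
Qed.

Lemma Ifirst_eq (u v : 'rV[R]_m) : (forall i, 0 <= u 0 i /\ 0 <= v 0 i) ->
  (forall i, 0 < u 0 i + v 0 i) -> (exists i, v 0 i = 0) ->
  Ifirst u v = [set i | v 0 i == 0].
Proof.
move=> nn pos z.
have nn' : forall i, 0 <= v 0 i /\ 0 <= u 0 i by move=> i; have [] := nn i.
have pos' : forall i, 0 < v 0 i + u 0 i by move=> i; rewrite addrC.
rewrite -(@Ilast_eq v u nn' pos' z).
apply/setP => i; rewrite !inE; apply: eq_forallb => j.
by rewrite !(qvec_swap u v) lerN2.
Qed.

Definition Gf (b u v : 'rV[R]_m) (t : R) :=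
  \sum_i b 0 i * ln ((1 - t) * u 0 i + t * v 0 i).

Lemma decomp (b u v : 'rV[R]_m) : (forall i, 0 <= u 0 i /\ 0 <= v 0 i) ->
  (forall i, 0 < u 0 i + v 0 i) ->
  exists C K, forall t, 0 < t < 1 ->
   `|Gf b u v t - ((\sum_(i in [set i | u 0 i == 0]) b 0 i) * ln t +
                  (\sum_(i in [set i | v 0 i == 0]) b 0 i) * ln (1 - t) + C)| <= K.
Proof.
move=> nn pos.
pose C := \sum_i ((u 0 i == 0)%:R * b 0 i * ln (v 0 i) + (v 0 i == 0)%:R * b 0 i * ln (u 0 i)).
pose H t := \sum_i ((u 0 i != 0) && (v 0 i != 0))%:R * (b 0 i * ln ((1 - t) * u 0 i + t * v 0 i)).
pose K := \sum_i `|b 0 i| * (`|ln (u 0 i)| + `|ln (v 0 i)|).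
exists C, K => t /andP[t0 t1].
have eG : Gf b u v t = (\sum_(i in [set i | u 0 i == 0]) b 0 i) * ln t +
                  (\sum_(i in [set i | v 0 i == 0]) b 0 i) * ln (1 - t) + C + H t.
  rewrite /Gf (eq_bigr (fun i => (if i \in [set i | u 0 i == 0] then b 0 i else 0) * ln t + (if i \in [set i | v 0 i == 0] then b 0 i else 0) * ln (1 - t) + ((u 0 i == 0)%:R * b 0 i * ln (v 0 i) + (v 0 i == 0)%:R * b 0 i * ln (u 0 i)) + ((u 0 i != 0) && (v 0 i != 0))%:R * (b 0 i * ln ((1 - t) * u 0 i + t * v 0 i)))); last first.
  { move=> i _; rewrite !inE; have [a b'] := nn i; have := pos i.
    case: (eqVneq (u 0 i) 0) => [ui|ui]; case: (eqVneq (v 0 i) 0) => [vi|vi] /=.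
    all: move=> p.
    all: first [ by move: p; rewrite ui vi addr0 ltxx
               | (rewrite ui add0r in p;
                  have -> : (1 - t) * u 0 i + t * v 0 i = t * v 0 i by rewrite ui; ring);
                  rewrite lnM ?posrE; [ring | lra | lra]
               | (rewrite vi addr0 in p;
                  have -> : (1 - t) * u 0 i + t * v 0 i = (1 - t) * u 0 i by rewrite vi; ring);
                  rewrite lnM ?posrE; [ring | lra | lra]
               | ring ]. }
  rewrite !big_split /= [\sum_(i in [set i0 | u 0 i0 == 0]) b 0 i]big_mkcond [\sum_(i in [set i0 | v 0 i0 == 0]) b 0 i]big_mkcond !mulr_suml /C /H big_split /= //.
have e : forall x y : R, x + y - x = y by move=> x y; ring.
rewrite eG e /H.
apply: le_trans (ler_norm_sum _ _ _) _; apply: ler_sum => i _.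
case: eqP => ui; case: eqP => vi /=; rewrite ?normr0 ?mul0r ?normr0;
  try by apply: mulr_ge0 => //; apply: addr_ge0.
rewrite mul1r normrM ler_wpM2l //.
have [a b'] := nn i.
have ua : 0 < u 0 i by rewrite lt_neqAle eq_sym a andbT; apply/eqP.
have vb : 0 < v 0 i by rewrite lt_neqAle eq_sym b' andbT; apply/eqP.
have yp : 0 < (1 - t) * u 0 i + t * v 0 i.
  have : 0 < (1 - t) * u 0 i by apply: mulr_gt0 => //; lra.
  have : 0 < t * v 0 i by apply: mulr_gt0.
  lra.
have e1 : (1 - t) * u 0 i + t * v 0 i = u 0 i + t * (v 0 i - u 0 i) by ring.
have e2 : (1 - t) * u 0 i + t * v 0 i = v 0 i + (1 - t) * (u 0 i - v 0 i) by ring.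
have [uv|vu] := leP (u 0 i) (v 0 i).
  have h1 : ln (u 0 i) <= ln ((1 - t) * u 0 i + t * v 0 i).
    rewrite ler_ln ?posrE // e1 lerDl; apply: mulr_ge0; lra.
  have h2 : ln ((1 - t) * u 0 i + t * v 0 i) <= ln (v 0 i).
    rewrite ler_ln ?posrE // e2 gerDl; apply: mulr_ge0_le0; lra.
  have n1 := ler_norm (ln (v 0 i)); have n2 := ler_norm (- ln (u 0 i)).
  rewrite normrN in n2; have := normr_ge0 (ln (u 0 i)); have := normr_ge0 (ln (v 0 i)); move=> ? ?; rewrite ler_norml; apply/andP; split; lra.
have h1 : ln (v 0 i) <= ln ((1 - t) * u 0 i + t * v 0 i).
  rewrite ler_ln ?posrE // e2 lerDl; apply: mulr_ge0; lra.
have h2 : ln ((1 - t) * u 0 i + t * v 0 i) <= ln (u 0 i).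
  rewrite ler_ln ?posrE // e1 gerDl; apply: mulr_ge0_le0; lra.
have n1 := ler_norm (ln (u 0 i)); have n2 := ler_norm (- ln (v 0 i)).
rewrite normrN in n2; have := normr_ge0 (ln (u 0 i)); have := normr_ge0 (ln (v 0 i)); move=> ? ?; rewrite ler_norml; apply/andP; split; lra.
Qed.

Lemma c_exists (b : 'rV[R]_m) (i : 'I_m) : b 0 i != 0 ->
  forall L, exists c, posv c /\ Lg c b = L.
Proof.
move=> bi L; exists (\row_k (if k == i then expR (L / b 0 i) else 1)); split.
  by move=> k; rewrite mxE; case: eqP => _; [apply: expR_gt0 | apply: ltr01].
rewrite /Lg (bigD1 i) //= mxE eqxx expRK mulrC divfK // big1 ?addr0 //.
by move=> k kne; rewrite mxE (negbTE kne) ln1 mulr0.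
Qed.
End Q.
Theorem theorem3 (R : realType) (l n m : nat)
  (A : 'M[R]_(l, m)) (B : 'M[R]_(n, m)) (y1 y2 b : 'rV[R]_m) :
  (exists y : 'rV[R]_m, in_ker A y /\ posv y) ->
  affine_dim (coefP A) 1 ->
  mondep B = 1%N ->
  (* y1, y2 are the two endpoints of the segment Pbar *)
  y1 != y2 ->
  (forall y, coefPbar A y <->
     exists t : R, 0 <= t <= 1 /\ y = (1 - t) *: y1 + t *: y2) ->
  (* b spans D *)
  (b == kermx (Dmat B))%MS ->
  ((forall c : 'rV[R]_m, posv c -> exists y, Yc A B c y) <->
   btilde_first y1 y2 b * btilde_last y1 y2 b < 0).
Proof.
move=> hpos _ hdim neq hchar hb.
have h : segchar A y1 y2 by exact: hchar.
have nn := seg_nneg h.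
have pos := seg_pos h hpos.
have z1 := seg_zero h neq.
have neq' : y2 != y1 by rewrite eq_sym.
have z2 := seg_zero (segchar_swap h) neq'.
have cP := @coefP_iff _ _ _ A _ _ h z1 z2 pos.
rewrite /btilde_first /btilde_last (@Ifirst_eq _ _ _ _ nn pos z2) (@Ilast_eq _ _ _ _ nn pos z1).
set bl := \sum_(i in [set i | y1 0 i == 0]) b 0 i.
set bf := \sum_(i in [set i | y2 0 i == 0]) b 0 i.
have [C [K hK]] := @decomp _ _ b _ _ nn pos.
have Gcont : forall t : R, 0 < t < 1 -> {for t, continuous (Gf R m b y1 y2)}.
  move=> t /andP[t0 t1].
  apply: (@cont_G R 'I_m (index_enum 'I_m) (fun i => b 0 i) (fun i => y1 0 i) (fun i => y2 0 i) t) => k.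
  have [a b'] := nn k; have p := pos k.
  have h2 : 0 <= t * y2 0 k by apply: mulr_ge0 => //; lra.
  have h1 : 0 <= (1 - t) * y1 0 k by apply: mulr_ge0 => //; lra.
  have [up|] := ltP 0 (y1 0 k).
    have : 0 < (1 - t) * y1 0 k by apply: mulr_gt0 => //; lra.
    lra.
  move=> u0; have vp : 0 < y2 0 k by lra.
  have : 0 < t * y2 0 k by apply: mulr_gt0.
  lra.
have LgG : forall t, Lg ((1 - t) *: y1 + t *: y2) b = Gf R m b y1 y2 t.
  by move=> t; rewrite /Lg /Gf; apply: eq_bigr => i _; rewrite !mxE.
have onto_iff : (forall c, posv c -> exists y, Yc A B c y) <->
    (forall L, exists t, 0 < t < 1 /\ Gf R m b y1 y2 t = L).
  have [i bi] : exists i, b 0 i != 0.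
    case: (boolP [exists i, b 0 i != 0]) => [/existsP //|/existsP hn].
    exfalso.
    have b0 : b = 0.
      apply/rowP => i; rewrite mxE; apply/eqP/negP => e; apply: hn; exists i; exact/negP.
    by move: hdim; rewrite /mondep -(eqmx_rank hb) b0 mxrank0.
  split.
    move=> H L; have [c [pc hc]] := @c_exists R m b i bi L.
    have [y hy] := H c pc.
    have [cy ey] := (@Yc_iff _ _ _ _ A B b c y pc hb).1 hy.
    have [t [ht e]] := (cP y).1 cy.
    by exists t; split => //; rewrite -LgG -e ey hc.
  move=> H c pc; have [t [ht e]] := H (Lg c b).
  exists ((1 - t) *: y1 + t *: y2); apply/(@Yc_iff _ _ _ _ A B b c _ pc hb).
  split; first by apply/cP; exists t.
  by rewrite LgG e.
rewrite onto_iff; split.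
  move=> H; case: (ltP (bf * bl) 0) => // hge.
  have hge' : 0 <= bl * bf by rewrite mulrC.
  have [L hL] := @core_notonto _ (Gf R m b y1 y2) _ _ _ _ hK hge'.
  have [t [ht e]] := H L.
  by move: (hL t ht); rewrite e eqxx.
move=> hlt; apply: (@core_onto _ _ _ _ _ _ Gcont hK).
by rewrite mulrC.
Qed.
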